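(* Assume the growth hypotheses described in the context, and let $C,C_0>0$ be constants such that $\int e^{t|y|^{\beta_i}}\nu(dy)\le C_0e^{Ct^{p/\tilde\alpha_i}}$ for all $t\ge0$ and all $1\le i\le N$ (such constants exist by the exponential moment assumption). Let $f\in L^1(\mu)$ be such that $f^c$ and $f^{cc}$ are well defined. Then for all $x\in\mathsf{X}$, $y\in\mathsf{Y}$, $$f^c(y)-c_2(y)\le A_+-\mu(f-c_1)+\sum_{i=1}^NK_+^iA_{\alpha_i}|y|^{\beta_i},$$ $$f^{cc}(x)-c_1(x)\ge\mu(f-c_1)-A_+-\log C_0-a_-(x)-C\sum_{i=1}^NN^{\frac{p}{\tilde\alpha_i}-1}\big(K_+^iA_{\alpha_i}+K_-^i|x|^{\alpha_i}\big)^{p/\tilde\alpha_i}.$$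
   Context: $(\mathsf{X},d_{\mathsf{X}})$, $(\mathsf{Y},d_{\mathsf{Y}})$ are Polish metric spaces with reference points $x_0,y_0$; $|x|:=d_{\mathsf{X}}(x,x_0)$, $|y|:=d_{\mathsf{Y}}(y,y_0)$. $\mu\in\mathcal{P}(\mathsf{X})$, $\nu\in\mathcal{P}(\mathsf{Y})$, $c:\mathsf{X}\times\mathsf{Y}\to\mathbb{R}$ measurable; $\mu(h):=\int h\,d\mu$. Conjugates: for measurable $f:\mathsf{X}\to[-\infty,\infty]$, $f^c(y):=-\log\int e^{f(x)-c(x,y)}\mu(dx)$ and $f^{cc}(x):=-\log\int e^{f^c(y)-c(x,y)}\nu(dy)$ (when the integrals are well defined). Growth hypotheses: fix $p>0$ with $\int e^{\lambda|y|^p}\nu(dy)<\infty$ for some $\lambda>0$; fix $N\ge0$ and $\alpha_i\in[0,p]$, $\beta_i\in[0,p)$ with $\alpha_i+\beta_i\le p$ ($1\le i\le N$), and set $\tilde\alpha_i:=p-\beta_i$. The cost has the form $c(x,y)=c_1(x)+c_2(y)+\hat c(x,y)$ with $c_1\in L^1(\mu)$, $c_2\in L^1(\nu)$ and $-a_-(x)-\sum_{i=1}^NK_-^i|x|^{\alpha_i}|y|^{\beta_i}\le\hat c(x,y)\le a_+(x)+\sum_{i=1}^NK_+^i|x|^{\alpha_i}|y|^{\beta_i}$, where $K_\pm^i\ge0$ and $a_\pm\ge0$ are measurable with $A_+:=\int a_+d\mu<\infty$. Set $A_{\alpha_i}:=\int|x|^{\alpha_i}\mu(dx)$, assumed finite.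 *)

(* Defs.v *)
From HB Require Import structures.
From mathcomp Require Import all_boot all_order all_algebra.
From mathcomp Require Import all_classical all_reals all_analysis measurable_realfun.
Set Implicit Arguments. Unset Strict Implicit. Unset Printing Implicit Defensive.
Import Order.TTheory GRing.Theory Num.Theory.
Local Open Scope classical_set_scope.
Local Open Scope ring_scope.

Definition is_metric {R : realType} {T : Type} (d : T -> T -> R) : Prop :=
  (forall x y, 0 <= d x y) /\ (forall x y, d x y = 0 <-> x = y) /\
  (forall x y, d x y = d y x) /\ (forall x y z, d x z <= d x y + d y z).

Definition polish_borel {R : realType} {disp : measure_display}
  (T : measurableType disp) (d : T -> T -> R) : Prop :=
  is_metric d /\
  (forall u : nat -> T,
     (forall e : R, 0 < e -> exists M : nat, forall m n, (M <= m)%N -> (M <= n)%N -> d (u m) (u n) < e) ->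
     exists l : T, forall e : R, 0 < e -> exists M : nat, forall n, (M <= n)%N -> d (u n) l < e) /\
  (exists s : nat -> T, forall x (e : R), 0 < e -> exists n, d x (s n) < e) /\
  (@measurable disp T =
     <<s [set B : set T | forall x, B x -> exists2 r : R, 0 < r & [set y | d x y < r] `<=` B] >>).

Local Open Scope ereal_scope.

Definition cconj {R : realType} {d1 : measure_display} {X : measurableType d1} {Y : Type}
  (mu : set X -> \bar R) (c : X -> Y -> R) (f : X -> \bar R) (y : Y) : \bar R :=
  - lne (\int[mu]_x expeR (f x - (c x y)%:E)).

Definition ccconj {R : realType} {d2 : measure_display} {Y : measurableType d2} {X : Type}
  (nu : set Y -> \bar R) (c : X -> Y -> R) (g : Y -> \bar R) (x : X) : \bar R :=
  - lne (\int[nu]_y expeR (g y - (c x y)%:E)).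

(* Main.v *)
Require Import Defs.
From HB Require Import structures.
From mathcomp Require Import all_boot all_order all_algebra.
From mathcomp Require Import all_classical all_reals all_analysis measurable_realfun.
From mathcomp Require Import lra ring.
Import Order.TTheory GRing.Theory Num.Theory.
Local Open Scope classical_set_scope.
Local Open Scope ring_scope.

Lemma dist_measurable (R : realType) (disp : measure_display) (T : measurableType disp)
  (d : T -> T -> R) (z : T) : polish_borel d -> measurable_fun setT (fun y => d y z).
Proof.
move=> [[d0 [d00 [dsym dtri]]] [_ [_ mE]]].
move=> mT; apply: (measurability _ (RGenInftyO.measurableE R)) => //.
move=> /= _ [_ [r ->] <-]; rewrite setTI mE; apply: sub_sigma_algebra => y /=.
rewrite in_itv /= => yr; exists (r - d y z); first by rewrite subr_gt0.
move=> w /= hw; rewrite in_itv /=.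
have := dtri w y z; rewrite (dsym w y); move=> h; lra.
Qed.

Lemma measurable_expeR (R : realType) : measurable_fun [set: \bar R] (@expeR R).
Proof.
rewrite (_ : expeR = fun x => if x == -oo%E then 0%E else er_map expR x); last first.
  by apply: funext => -[].
apply: measurable_fun_ifT => //.
- apply: (measurable_fun_bool true).
  rewrite setTI (_ : _ @^-1` _ = [set -oo%E]); first exact: emeasurable_set1.
  by apply/seteqP; split => x /=; [move=> /eqP|move=> ->; rewrite eqxx].
- apply: (@measurable_er_map _ R R); exact: measurable_expR.
Qed.

Lemma lne_le (R : realType) (a b : \bar R) : (0 <= a -> a <= b -> lne a <= lne b)%E.
Proof.
move=> a0 ab; rewrite -lee_expeR !lneK //; rewrite in_itv /= ?a0 ?leey //.
by rewrite (le_trans a0 ab).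
Qed.

Lemma jensen_exp (R : realType) (N : nat) (z : 'I_N -> R) : (0 < N)%N ->
  expR ((\sum_i z i) / N%:R) <= (\sum_i expR (z i)) / N%:R.
Proof.
move=> N0; set m := (\sum_i z i) / N%:R.
have Npos : (0 : R) < N%:R by rewrite ltr0n.
have h i : expR m * (1 + (z i - m)) <= expR (z i).
  have -> : expR (z i) = expR (z i - m) * expR m by rewrite -expRD subrK.
  rewrite mulrC ler_wpM2r ?expR_ge0 //.
  exact: expR_ge1Dx.
rewrite ler_pdivlMr //.
apply: le_trans (ler_sum _ (fun i _ => h i)).
rewrite -mulr_sumr; apply: ler_wpM2l; first exact: expR_ge0.
rewrite big_split /= sumr_const card_ord big_split /= sumrN sumr_const card_ord.
rewrite -[m *+ N]mulr_natr /m divfK ?gt_eqF // subrr addr0 lexx //.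
Qed.

Lemma int_aff d (T : measurableType d) (R : realType) (mu : probability T R)
  (h : T -> R) (a b : R) :
  mu.-integrable setT (EFin \o h) ->
  mu.-integrable setT (EFin \o (fun x => a + b * h x)).
Proof.
move=> ih.
apply: (@eq_integrable _ _ _ mu setT measurableT
   ((EFin \o cst a) \+ (fun x => b%:E * (EFin \o h) x))%E).
  by move=> x _ /=.
apply: integrableD => //; first exact: finite_measure_integrable_cst.
exact: integrableZl.
Qed.

Lemma jensen_int d (T : measurableType d) (R : realType) (mu : probability T R)
  (h : T -> R) :
  mu.-integrable setT (EFin \o h) ->
  ((expR (\int[mu]_x h x))%:E <= \int[mu]_x (expR (h x))%:E)%E.
Proof.
move=> ih.
have mh : measurable_fun setT h by move/integrableP: ih => [/measurable_EFinP].
have meh : measurable_fun setT (EFin \o (fun x => expR (h x))).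
  by apply/measurable_EFinP; apply: measurableT_comp => //; exact: measurable_expR.
have [->|fin] := eqVneq (\int[mu]_x (expR (h x))%:E)%E +oo%E; first exact: leey.
have ieh : mu.-integrable setT (EFin \o (fun x => expR (h x))).
  apply/integrableP; split => //.
  under eq_integral do rewrite gee0_abs ?lee_fin ?expR_ge0//.
  by rewrite ltey.
set m := \int[mu]_x h x.
rewrite -(@fineK _ (\int[mu]_x (expR (h x))%:E)%E); last exact: integrable_fin_num.
rewrite lee_fin.
have -> : expR m = \int[mu]_x (expR m * (1 - m) + expR m * h x).
  rewrite RintegralD //; last 2 first.
  - exact: (@finite_measure_integrable_cst _ _ _ mu setT (expR m * (1 - m))).
  - have := @int_aff _ _ _ mu h 0 (expR m) ih; apply: eq_integrable => // x _ /=; by rewrite add0r.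
  rewrite (@Rintegral_cst _ _ _ mu setT measurableT).
  have -> : fine (mu [set: T]) = 1 by rewrite probability_setT.
  rewrite RintegralZl // mulr1 -/m; lra.
apply: le_Rintegral => //.
- exact: (@int_aff _ _ _ mu h (expR m * (1 - m)) (expR m) ih).
- move=> x _; rewrite -mulrDr.
  have -> : expR (h x) = expR m * expR (h x - m) by rewrite -expRD addrC subrK.
  rewrite ler_wpM2l ?expR_ge0 //; apply: le_trans (expR_ge1Dx _); lra.
Qed.

Section IntR.
Context {d : measure_display} {T : measurableType d} {R : realType} {mu : probability T R}.

Lemma intB_R (f g : T -> R) : mu.-integrable setT (EFin \o f) ->
  mu.-integrable setT (EFin \o g) -> mu.-integrable setT (EFin \o (fun x => f x - g x)).
Proof.
move=> hf hg; apply: (eq_integrable measurableT ((EFin \o f) \- (EFin \o g))%E); last exact: integrableB.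
by move=> x _ /=; rewrite EFinB.
Qed.

Lemma intD_R (f g : T -> R) : mu.-integrable setT (EFin \o f) ->
  mu.-integrable setT (EFin \o g) -> mu.-integrable setT (EFin \o (fun x => f x + g x)).
Proof.
move=> hf hg; apply: (eq_integrable measurableT ((EFin \o f) \+ (EFin \o g))%E); last exact: integrableD.
by move=> x _ /=; rewrite EFinD.
Qed.

Lemma intcst_R (k : R) : mu.-integrable setT (EFin \o (fun _ : T => k)).
Proof. exact: (@finite_measure_integrable_cst _ _ _ mu setT k). Qed.

Lemma intZ_R (k : R) (f : T -> R) : mu.-integrable setT (EFin \o f) ->
  mu.-integrable setT (EFin \o (fun x => k * f x)).
Proof.
move=> hf; apply: (eq_integrable measurableT (fun x => k%:E * (EFin \o f) x)%E); last exact: integrableZl.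
by [].
Qed.

Lemma intsum_R (N : nat) (F : 'I_N -> T -> R) :
  (forall i, mu.-integrable setT (EFin \o F i)) ->
  mu.-integrable setT (EFin \o (fun x => \sum_i F i x)).
Proof.
move=> hF.
have := @integrable_sum _ _ _ mu setT measurableT _ (index_enum 'I_N) predT
  (fun i x => (F i x)%:E) (fun i _ => hF i).
apply: eq_integrable => // x _ /=; by rewrite sumEFin.
Qed.

Lemma Rint_sum (N : nat) (F : 'I_N -> T -> R) :
  (forall i, mu.-integrable setT (EFin \o F i)) ->
  \int[mu]_x (\sum_i F i x) = \sum_i \int[mu]_x F i x.
Proof.
move=> hF; rewrite /Rintegral.
under eq_integral do rewrite -sumEFin.
rewrite integral_sum //.
rewrite -EFin_sum_fine //= => i _.
exact: (integrable_fin_num measurableT (hF i)).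
Qed.

End IntR.
Arguments intB_R {d T R mu f g}.
Arguments intD_R {d T R mu f g}.
Arguments intZ_R {d T R mu} k {f}.
Arguments intsum_R {d T R mu N F}.
Arguments Rint_sum {d T R mu N F}.

Theorem lemma5p5 (R : realType) (d1 d2 : measure_display)
  (X : measurableType d1) (Y : measurableType d2)
  (dX : X -> X -> R) (dY : Y -> Y -> R) (x0 : X) (y0 : Y)
  (mu : probability X R) (nu : probability Y R)
  (c : X -> Y -> R) (c1 : X -> R) (c2 : Y -> R) (chat : X -> Y -> R)
  (p lam : R) (N : nat) (alpha beta Kp Km : 'I_N -> R)
  (ap am : X -> R) (C C0 : R) (f : X -> R) :
  polish_borel dX -> polish_borel dY ->
  (* cost *)
  measurable_fun setT (fun z : X * Y => c z.1 z.2) ->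
  mu.-integrable setT (EFin \o c1) ->
  nu.-integrable setT (EFin \o c2) ->
  (forall x y, c x y = c1 x + c2 y + chat x y) ->
  (* exponential moment of nu *)
  0 < p -> 0 < lam ->
  (\int[nu]_y (expR (lam * (dY y y0) `^ p))%:E < +oo)%E ->
  (* exponents and constants *)
  (forall i, 0 <= alpha i <= p) ->
  (forall i, 0 <= beta i < p) ->
  (forall i, alpha i + beta i <= p) ->
  (forall i, 0 <= Kp i) -> (forall i, 0 <= Km i) ->
  (forall x, 0 <= ap x) -> (forall x, 0 <= am x) ->
  measurable_fun setT ap -> measurable_fun setT am ->
  (\int[mu]_x (ap x)%:E < +oo)%E ->
  (forall i, \int[mu]_x ((dX x x0) `^ (alpha i))%:E < +oo)%E ->
  (* growth bounds on chat *)
  (forall x y,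
     - am x - \sum_(i < N) Km i * (dX x x0) `^ (alpha i) * (dY y y0) `^ (beta i)
       <= chat x y) ->
  (forall x y,
     chat x y <= ap x + \sum_(i < N) Kp i * (dX x x0) `^ (alpha i) * (dY y y0) `^ (beta i)) ->
  (* the constants C, C0 *)
  0 < C -> 0 < C0 -> 1 <= C0 ->
  (forall (t : R) (i : 'I_N), 0 <= t ->
     (\int[nu]_y (expR (t * (dY y y0) `^ (beta i)))%:E
       <= (C0 * expR (C * t `^ (p / (p - beta i))))%:E)%E) ->
  (* f in L^1(mu), with f^c and f^cc well defined *)
  mu.-integrable setT (EFin \o f) ->
  measurable_fun [set: Y] (fun y : Y => cconj mu c (EFin \o f) y) ->
  let Aplus := fine (\int[mu]_x (ap x)%:E) in
  let Aa := fun i => fine (\int[mu]_x ((dX x x0) `^ (alpha i))%:E) in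
  let mufc1 := fine (\int[mu]_x (f x - c1 x)%:E) in
  forall (x : X) (y : Y),
    (cconj mu c (EFin \o f) y - (c2 y)%:E
       <= (Aplus - mufc1 + \sum_(i < N) Kp i * Aa i * (dY y y0) `^ (beta i))%:E)%E /\
    (ccconj nu c (cconj mu c (EFin \o f)) x - (c1 x)%:E
       >= (mufc1 - Aplus - ln C0 - am x
           - C * \sum_(i < N) (N%:R) `^ (p / (p - beta i) - 1)
                 * (Kp i * Aa i + Km i * (dX x x0) `^ (alpha i)) `^ (p / (p - beta i)))%:E)%E.
Proof.
move=> PX PY mc ic1 ic2 cdef p0 lam0 mom hal hbe hab hKp hKm hap ham map mam iap ial
  chatlo chathi C0' C00 C01 hC intf mfc Aplus Aa mufc1 x y.
have mX : measurable_fun setT (fun x => dX x x0) := @dist_measurable _ _ _ dX x0 PX.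
have mY : measurable_fun setT (fun y => dY y y0) := @dist_measurable _ _ _ dY y0 PY.
have mcx y' : measurable_fun setT (fun x => c x y').
  exact: (measurableT_comp mc (pair2_measurable y')).
have mcy x' : measurable_fun setT (fun y => c x' y).
  exact: (measurableT_comp mc (pair1_measurable x')).
have mf : measurable_fun setT f by move/integrableP: intf => [/measurable_EFinP].
have mc1 : measurable_fun setT c1 by move/integrableP: ic1 => [/measurable_EFinP].
have mc2 : measurable_fun setT c2 by move/integrableP: ic2 => [/measurable_EFinP].
have ipow i : mu.-integrable setT (EFin \o (fun x => dX x x0 `^ alpha i)).
  apply/integrableP; split.
    apply/measurable_EFinP; exact: (measurableT_comp (measurable_powR (alpha i)) mX).
  under eq_integral do rewrite /comp gee0_abs ?lee_fin ?powR_ge0 //.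
  exact: ial.
have iapp : mu.-integrable setT (EFin \o ap).
  apply/integrableP; split; first exact/measurable_EFinP.
  under eq_integral do rewrite /comp gee0_abs ?lee_fin ?hap //.
  exact: iap.
have part1 : forall y', (cconj mu c (EFin \o f) y' - (c2 y')%:E
       <= (Aplus - mufc1 + \sum_(i < N) Kp i * Aa i * (dY y' y0) `^ (beta i))%:E)%E.
  move=> y'.
  pose u := fun i => dY y' y0 `^ beta i.
  pose g := fun i x => Kp i * u i * dX x x0 `^ alpha i.
  have ig i : mu.-integrable setT (EFin \o g i) := intZ_R (Kp i * u i) (ipow i).
  pose h x := f x - c1 x - c2 y' - ap x - \sum_i g i x.
  have i1 : mu.-integrable setT (EFin \o (fun x => f x - c1 x)) := intB_R intf ic1.
  have i2 : mu.-integrable setT (EFin \o (fun x => f x - c1 x - c2 y')) := intB_R i1 (intcst_R _).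
  have i3 : mu.-integrable setT (EFin \o (fun x => f x - c1 x - c2 y' - ap x)) := intB_R i2 iapp.
  have isg : mu.-integrable setT (EFin \o (fun x => \sum_i g i x)) := intsum_R ig.
  have ih : mu.-integrable setT (EFin \o h) := intB_R i3 isg.
  have Ih : \int[mu]_x h x = mufc1 - c2 y' - Aplus - \sum_i Kp i * Aa i * u i.
    rewrite /h RintegralB // RintegralB // RintegralB //; last exact: intcst_R.
    rewrite (@Rintegral_cst _ _ _ mu setT measurableT).
    have -> : fine (mu [set: X]) = 1 by rewrite probability_setT.
    rewrite (Rint_sum ig) mulr1.
    have -> : \sum_i \int[mu]_x g i x = \sum_i Kp i * Aa i * u i.
      apply: eq_bigr => i _; rewrite /g RintegralZl //.
      by rewrite mulrAC.
    by [].
  have J := @jensen_int _ _ _ mu h ih.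
  have mh : measurable_fun setT h by move/integrableP: ih => [/measurable_EFinP].
  have E z : expeR ((EFin \o f) z - (c z y')%:E) = (expR (f z - c z y'))%:E by [].
  have le1 : (\int[mu]_x (expR (h x))%:E <= \int[mu]_x expeR ((EFin \o f) x - (c x y')%:E))%E.
    rewrite [X in (_ <= X)%E](eq_integral (fun z => (expR (f z - c z y'))%:E)); last first.
      by move=> z _; rewrite E.
    apply: ge0_le_integral => //.
    - have meh := measurableT_comp (@measurable_expR R) mh. apply/measurable_EFinP; exact: meh.
    - have meh2 := measurableT_comp (@measurable_expR R) (measurable_funB mf (mcx y')).
      by apply/measurable_EFinP; exact: meh2.
    - move=> x' _; rewrite lee_fin ler_expR /h cdef.
      have := chathi x' y'.
      have -> : \sum_i g i x' = \sum_(i < N) Kp i * dX x' x0 `^ alpha i * dY y' y0 `^ beta i.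
        by apply: eq_bigr => i _; rewrite /g /u mulrAC.
      lra.
  have L : ((\int[mu]_x h x)%:E <= lne (\int[mu]_x expeR ((EFin \o f) x - (c x y')%:E)))%E.
    rewrite -[X in (X <= _)%E]expeRK; apply: lne_le; first exact: expeR_ge0.
    exact: le_trans J le1.
  rewrite Ih /u in L.
  rewrite /cconj.
  have -> : (Aplus - mufc1 + \sum_(i < N) Kp i * Aa i * dY y' y0 `^ beta i)%:E
     = (- (mufc1 - c2 y' - Aplus - \sum_i Kp i * Aa i * dY y' y0 `^ beta i)%:E - (c2 y')%:E)%E.
    rewrite -EFinN -EFinB; congr EFin; lra.
  by apply: leeB => //; rewrite leeN2.
split; first exact: part1 y.
pose u y' i := dY y' y0 `^ beta i.
pose t i := Kp i * Aa i + Km i * dX x x0 `^ alpha i.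
pose K := Aplus - mufc1 - c1 x + am x.
pose S := \sum_(i < N) N%:R `^ (p / (p - beta i) - 1) * t i `^ (p / (p - beta i)).
have Aa0 i : 0 <= Aa i.
  by apply: fine_ge0; apply: integral_ge0 => z _; rewrite lee_fin powR_ge0.
have t0 i : 0 <= t i.
  by apply: addr_ge0; apply: mulr_ge0 => //; exact: powR_ge0.
have pw y' : (cconj mu c (EFin \o f) y' - (c x y')%:E <= (K + \sum_i t i * u y' i)%:E)%E.
  have := part1 y'.
  case: (cconj mu c (EFin \o f) y') => [r| |] //=; last by move=> _; rewrite addNye leNye.
  rewrite -!EFinD !lee_fin cdef => hr.
  have := chatlo x y'.
  have -> : \sum_i t i * u y' i = \sum_(i < N) Kp i * Aa i * dY y' y0 `^ beta i
      + \sum_(i < N) Km i * dX x x0 `^ alpha i * dY y' y0 `^ beta i.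
    rewrite -big_split /=; apply: eq_bigr => i _; rewrite /t /u; lra.
  rewrite /K; lra.
have mG : measurable_fun setT (fun y' => K + \sum_i t i * u y' i).
  apply: measurable_funD => //; apply: measurable_sum => i.
  apply: measurable_funM => //.
  exact: (measurableT_comp (measurable_powR (beta i)) mY).
have B : (\int[nu]_y' (expR (K + \sum_i t i * u y' i))%:E
          <= (expR K * C0 * expR (C * S))%:E)%E.
  have mu' i : measurable_fun setT (fun y' => u y' i).
    exact: (measurableT_comp (measurable_powR (beta i)) mY).
  have [N0|Npos] := posnP N.
    have sum0 (F : 'I_N -> R) : \sum_i F i = 0.
      apply: big1 => i _; have h1 := ltn_ord i.
      have h2 : (N <= 0)%N by rewrite N0.
      by have := leq_trans h1 h2.
    rewrite /S sum0 mulr0 expR0 mulr1.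
    under eq_integral => y' _ do rewrite (sum0 (fun i => t i * u y' i)) addr0.
    have := @integral_cst _ _ _ nu setT measurableT ((expR K)%:E).
    rewrite /= => ->; rewrite probability_setT mule1 lee_fin.
    by rewrite ler_peMr ?expR_ge0.
  pose q i := p / (p - beta i).
  pose a i := C * (N%:R * t i) `^ q i.
  pose ma := (\sum_i a i) / N%:R.
  have Nr0 : (0 : R) < N%:R by rewrite ltr0n.
  have Sma : C * S = ma.
    rewrite /ma /S mulr_sumr mulr_suml; apply: eq_bigr => i _.
    rewrite /a powRM ?ler0n ?t0 // powRB; last by apply/implyP => _; rewrite gt_eqF.
    rewrite (@powRr1 _ N%:R) ?ler0n // /q.
    by ring.
  pose k i := expR K * expR (ma - a i) / N%:R.
  pose G i y' := expR (N%:R * t i * u y' i).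
  have pt y' : expR (K + \sum_i t i * u y' i) <= \sum_i k i * G i y'.
    pose z i := N%:R * t i * u y' i + (ma - a i).
    have Jz := @jensen_exp R N z Npos.
    have Sz : (\sum_i z i) / N%:R = \sum_i t i * u y' i.
      have e1 : \sum_i z i = N%:R * \sum_i t i * u y' i.
        rewrite /z big_split /= sumrB sumr_const card_ord.
        rewrite -[ma *+ N]mulr_natr /ma divfK ?gt_eqF // subrr addr0 mulr_sumr.
        by apply: eq_bigr => i _; rewrite mulrA.
      by rewrite e1 mulrC mulrA mulVf ?gt_eqF // mul1r.
    rewrite Sz in Jz.
    rewrite expRD; apply: le_trans (ler_wpM2l (expR_ge0 K) Jz) _.
    rewrite mulr_suml mulr_sumr le_eqVlt; apply/orP; left; apply/eqP.
    by apply: eq_bigr => i _; rewrite /k /G /z (expRD (N%:R * t i * u y' i)); ring.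
  have mGi i : measurable_fun setT (G i).
    have := measurableT_comp (@measurable_expR R) (measurable_funM (measurable_cst (N%:R * t i)) (mu' i)).
    by [].
  have k0 i : 0 <= k i by rewrite /k !mulr_ge0 ?expR_ge0 ?invr_ge0 ?ler0n.
  apply: (@le_trans _ _ (\int[nu]_y' (\sum_i k i * G i y')%:E)%E).
    apply: ge0_le_integral => //.
    - have := measurableT_comp (@measurable_expR R) mG.
      by move=> hh; apply/measurable_EFinP; exact: hh.
    - apply/measurable_EFinP; apply: measurable_sum => i.
      exact: measurable_funM.
    - by move=> y' _; rewrite lee_fin.
  have ee y' : ((\sum_i k i * G i y')%:E = \sum_i (k i)%:E * (G i y')%:E)%E.
    by rewrite -sumEFin; apply: eq_bigr => i _; rewrite EFinM.
  under eq_integral => y' _ do rewrite ee.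
  rewrite ge0_integral_sum //; last 2 first.
    move=> i; have hh : measurable_fun setT (EFin \o (fun y' => k i * G i y')).
      by apply/measurable_EFinP; apply: measurable_funM => //; exact: mGi.
    exact: hh.
    by move=> i y' _; rewrite -EFinM lee_fin mulr_ge0 ?expR_ge0.
  have -> : (\sum_i \int[nu]_y' ((k i)%:E * (G i y')%:E) =
      \sum_i (k i)%:E * \int[nu]_y' (G i y')%:E)%E.
    apply: eq_bigr => i _; apply: (@ge0_integralZl_EFin _ _ _ nu setT measurableT (fun y' => (G i y')%:E)) => //.
    - by move=> y' _; rewrite lee_fin expR_ge0.
    - by apply/measurable_EFinP; exact: mGi.
  apply: (@le_trans _ _ (\sum_i (k i)%:E * (C0 * expR (a i))%:E)%E).
    apply: lee_sum => i _; apply: lee_wpmul2l; first by rewrite lee_fin.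
    have := hC (N%:R * t i) i (mulr_ge0 (ler0n _ _) (t0 i)).
    by [].
  rewrite sumEFin lee_fin le_eqVlt; apply/orP; left; apply/eqP.
  rewrite Sma.
  have each i : k i * (C0 * expR (a i)) = expR K * C0 * expR ma / N%:R.
    rewrite /k -[in RHS](subrK (a i) ma) (expRD (ma - a i)); ring.
  rewrite (eq_bigr _ (fun i _ => each i)) sumr_const card_ord -[_ *+ N]mulr_natr.
  by rewrite divfK // gt_eqF.
have le1 : (\int[nu]_y' expeR (cconj mu c (EFin \o f) y' - (c x y')%:E)
          <= \int[nu]_y' (expR (K + \sum_i t i * u y' i))%:E)%E.
  apply: ge0_le_integral => //.
  - by move=> y' _; exact: expeR_ge0.
  - have := measurableT_comp (@measurable_expeR R) (emeasurable_funB mfc (measurableT_comp (@EFin_measurable R setT) (mcy x))).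
    by [].
  - have := measurableT_comp (@measurable_expR R) mG.
    by move=> hh; apply/measurable_EFinP; exact: hh.
  - move=> y' _; rewrite -[X in (_ <= X)%E]/(expeR ((K + \sum_i t i * u y' i)%:E)).
    by rewrite lee_expeR.
have Bpos : 0 < expR K * C0 * expR (C * S).
  by rewrite !mulr_gt0 ?expR_gt0.
have L : (lne (\int[nu]_y' expeR (cconj mu c (EFin \o f) y' - (c x y')%:E))
          <= (K + ln C0 + C * S)%:E)%E.
  have I0 : (0 <= \int[nu]_y' expeR (cconj mu c (EFin \o f) y' - (c x y')%:E))%E.
    by apply: integral_ge0 => y' _; exact: expeR_ge0.
  have := @lne_le R _ _ I0 (le_trans le1 B).
  rewrite lne_EFin // lnM ?posrE ?mulr_gt0 ?expR_gt0 // lnM ?posrE ?expR_gt0 // !expRK.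
  by [].
rewrite /ccconj.
have -> : (mufc1 - Aplus - ln C0 - am x - C * S)%:E = (- (K + ln C0 + C * S)%:E - (c1 x)%:E)%E.
  rewrite -EFinN -EFinB; congr EFin; rewrite /K; lra.
by apply: leeB => //; rewrite leeN2.
Qed.
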